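(* For any groupcast index coding problem, the optimal broadcast rate satisfies $\beta\le\beta_{IUPM}$, where $\beta_{IUPM}$ is the independent user partition multicast rate defined in the context.
   Context: GIC problem: there are $m$ packets $x_1,\dots,x_m$, each a binary string of length $t$. For each $i\in[m]$ there is a nonempty set $U_i=\{u_i^1,\dots,u_i^{|U_i|}\}$ of users demanding $x_i$, $U=\bigcup_i U_i$; user $u_i^j$ knows the packets $x_{i'}$, $i'\in A_i^j$, where $A_i^j\subseteq[m]\setminus\{i\}$. An index code of length $r$ for packet length $t$ consists of an encoder $\phi:(\{0,1\}^t)^m\to\{0,1\}^r$ and, for each user $u_i^j$, a decoder $\psi_i^j$ mapping $\phi(x_1,\dots,x_m)$ together with $(x_{i'})_{i'\in A_i^j}$ to $x_i$, correctly for all packet values. The optimal broadcast rate is $\beta=\inf_t\inf r/t$, the inner infimum over all index codes for packet length $t$. IUPM rate: take a partition of $U$ into nonempty disjoint sets $W_1,\dots,W_h$ ($1\le h\le m$), with $Y_e=\{i: u_i^j\in W_e\text{ for some } j\}$, $c_e=\min\{|A_i^j\cap Y_e|: u_i^j\in W_e\}$ and $b_e=|Y_e|-c_e$. Let $\mathbb{F}=GF(2^s)$ for some $s\ge1$, with packets viewed (when $s\mid t$) as vectors in $\mathbb{F}^{t/s}$ and linear combinations taken componentwise. A valid coefficient choice consists, for each $e\in[h]$, of $b_e$ vectors $\alpha\in\mathbb{F}^m$ with $\alpha_i=0$ for $i\notin Y_e$, such that every user $u_i^j\in W_e$ can recover $x_i$ from the $b_e$ combinations $\sum_{i'}\alpha_{i'}x_{i'}$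 together with its side information (e.g. the combinations of a $(|Y_e|,b_e)$ MDS code on the packets of $Y_e$). Let $\mathbf N$ be the matrix whose rows are all $\sum_e b_e$ of these vectors. The IUPM rate of the partition is the minimum of $\operatorname{rank}\mathbf N$ over $s$ and all valid coefficient choices, and $\beta_{IUPM}$ is the minimum of this over all user partitions. *)

(* Defs.v *)
From HB Require Import structures.
From mathcomp Require Import all_boot all_order all_algebra.
From mathcomp Require Import classical_sets reals.
Set Implicit Arguments. Unset Strict Implicit. Unset Printing Implicit Defensive.
Import Order.TTheory GRing.Theory Num.Theory.
Local Open Scope ring_scope.

(* A GIC problem with m packets is given by a finite type U of users, the
   demanded packet  dem u  of each user and its side-information set  A u.
   (Standing hypotheses  dem u \notin A u  and  every packet is demanded
   are stated as hypotheses of the theorem.) *)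
Section GIC.
Variables (m : nat) (U : finType) (dem : U -> 'I_m) (A : U -> {set 'I_m}).

Definition bits (t : nat) := (t.-tuple bool)%type.

Definition is_index_code (t r : nat) (phi : {ffun 'I_m -> bits t} -> bits r) : Prop :=
  forall u : U,
    exists psi : bits r -> {ffun {i : 'I_m | i \in A u} -> bits t} -> bits t,
      forall x : {ffun 'I_m -> bits t},
        psi (phi x) [ffun j => x (val j)] = x (dem u).

Definition code_rates (R : realType) : set R :=
  [set q : R | exists (t r : nat) (phi : {ffun 'I_m -> bits t} -> bits r),
      (0 < t)%N /\ is_index_code phi /\ q = r%:R / t%:R]%classic.

Definition beta (R : realType) : R := inf (code_rates (R:=R)).

Definition Yset (W : {set U}) : {set 'I_m} := [set dem u | u in W].

(* c_e = min_{u in W} |A u :&: Y_e|  (for nonempty W; the neutral element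
   #|Y_e| is never the minimum's only contributor when W is nonempty since
   |A u :&: Y_e| <= |Y_e|) *)
Definition cval (W : {set U}) : nat :=
  \big[minn/#|Yset W|]_(u in W) #|A u :&: Yset W|.

Definition bval (W : {set U}) : nat := (#|Yset W| - cval W)%N.

Definition valid_coeffs (F : finFieldType) (W : {set U})
    (alpha : 'M[F]_(bval W, m)) : Prop :=
  (forall (k : 'I_(bval W)) (i : 'I_m), i \notin Yset W -> alpha k i = 0) /\
  (forall u, u \in W ->
     exists dec : 'cV[F]_(bval W) -> {ffun {i : 'I_m | i \in A u} -> F} -> F,
       forall x : 'cV[F]_m,
         dec (alpha *m x) [ffun j => x (val j) 0] = x (dem u) 0).

Definition user_partition (h : nat) (W : 'I_h -> {set U}) : Prop :=
  [/\ (0 < h)%N, (h <= m)%N,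
      (forall e, W e != finset.set0),
      (forall e e', e != e' -> [disjoint W e & W e']) &
      (forall u, exists e, u \in W e)].

(* the set of ranks of N over all partitions, all s >= 1, the field
   GF(2^s) (any finite field with 2^s elements), and all valid choices *)
Definition iupm_rates (R : realType) : set R :=
  [set q : R | exists (h : nat) (W : 'I_h -> {set U}) (s : nat) (F : finFieldType)
                  (alpha : forall e : 'I_h, 'M[F]_(bval (W e), m)),
      [/\ user_partition W, (0 < s)%N, #|F| = (2 ^ s)%N,
          (forall e, valid_coeffs (alpha e)) &
          q = (\rank (\mxcol_e alpha e))%:R]]%classic.

(* beta_IUPM: the minimum (an infimum of a set of naturals) of these ranks *)
Definition beta_IUPM (R : realType) : R := inf (iupm_rates (R:=R)).

End GIC.

(* Main.v *)
Require Import Defs.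
From HB Require Import structures.
From mathcomp Require Import all_boot all_order all_algebra.
From mathcomp Require Import classical_sets reals.
Import Order.TTheory GRing.Theory Num.Theory.
Local Open Scope ring_scope.

Lemma fin_bij (T1 T2 : finType) : #|T1| = #|T2| ->
  {f : T1 -> T2 & {g : T2 -> T1 | cancel f g}}.
Proof.
move=> e.
exists (fun x => enum_val (cast_ord e (enum_rank x))).
exists (fun y => enum_val (cast_ord (esym e) (enum_rank y))).
by move=> x; rewrite enum_valK cast_ordK enum_rankK.
Qed.

Lemma card_bits s : #|{: bits s}| = (2 ^ s)%N.
Proof. by rewrite /bits card_tuple card_bool. Qed.

Section Main.
Variables (R : realType) (m : nat) (U : finType)
    (dem : U -> 'I_m) (A : U -> {set 'I_m}).

Lemma code_lb : has_lbound (@code_rates m U dem A R).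
Proof.
exists 0 => q [t [r [phi [_ [_ ->]]]]].
by rewrite divr_ge0 // ler0n.
Qed.

Lemma iupm_code q : @iupm_rates m U dem A R q -> @code_rates m U dem A R q.
Proof.
case=> h [W [s [F [alpha [Wp s0 cardF valid ->]]]]].
set N := \mxcol_e alpha e.
set rho := \rank N.
have [enc [dec encK]] := @fin_bij (bits s) F (etrans (card_bits s) (esym cardF)).
have cE : #|{: 'cV[F]_rho}| = #|{: bits (rho * s)}|.
  by rewrite card_mx cardF card_bits muln1 -expnM mulnC.
have [E [D EK]] := @fin_bij _ _ cE.
exists s, (rho * s)%N, (fun x => E (row_base N *m \col_i enc (x i))).
split => //; split; last first.
  by rewrite natrM mulfK // pnatr_eq0 -lt0n.
move=> u.
case: Wp => _ _ _ _ /(_ u) [e ue].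
have [_ /(_ u ue) [decu Hdec]] := valid e.
exists (fun c side => dec (decu (submxcol (N *m pinvmx (row_base N) *m D c) e)
                                [ffun j => enc (side j)])).
move=> x.
rewrite EK mulmxA mulmxKpV; last by rewrite (eq_row_base N) submx_refl.
rewrite -submxcol_mul mxcolK.
set X := \col_i enc (x i).
have -> : [ffun j => enc ([ffun j0 => x (val j0)] j)] =
          [ffun j : {i : 'I_m | i \in A u} => X (val j) 0].
  by apply/ffunP => j; rewrite !ffunE mxE.
by rewrite Hdec mxE encK.
Qed.

End Main.

Theorem theorem3 (R : realType) (m : nat) (U : finType)
    (dem : U -> 'I_m) (A : U -> {set 'I_m})
    (hA : forall u : U, dem u \notin A u)
    (hdem : forall i : 'I_m, exists u : U, dem u = i) :
  beta dem A R <= beta_IUPM dem A R.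
Proof.
have lb := @code_lb R m U dem A.
have ge q : @code_rates m U dem A R q -> beta dem A R <= q by move=> cq; exact: ge_inf lb q cq.
case: (posnP m) => [m0 | mpos].
  rewrite /beta_IUPM.
  have -> : @iupm_rates m U dem A R = set0.
    apply/seteqP; split => q //= [h [W [s [F [alpha [[h0 hm _ _ _] _ _ _ _]]]]]].
    by move: hm; rewrite m0 leqn0 => /eqP h00; rewrite h00 in h0.
  rewrite inf0; apply: ge.
  exists 1%N, 0%N, (fun _ => [tuple]); split => //; split; last by rewrite mul0r.
  by move=> u; have := ltn_ord (dem u); rewrite {2}m0.
apply: lb_le_inf; last by move=> q /iupm_code; exact: ge.
pose W (e : 'I_m) := [set u | dem u == e].
have Y1 e : Yset dem (W e) = [set e].
  apply/setP=> i; rewrite inE; apply/imsetP/eqP => [[u]|->].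
    by rewrite inE => /eqP <-.
  by have [u hu] := hdem e; exists u; rewrite ?inE hu.
have b1 e : bval dem A (W e) = 1%N.
  rewrite /bval /cval Y1 cards1.
  have [u0 hu0] := hdem e.
  have u0W : u0 \in W e by rewrite inE hu0.
  rewrite (eq_bigr (fun _ => 0%N)); last first.
    move=> u; rewrite inE => /eqP hu.
    apply/eqP; rewrite cards_eq0 finset.setIC finset.setI_eq0 disjoints1 -hu; exact: hA.
  rewrite -big_filter.
  have : u0 \in [seq u <- index_enum U | u \in W e].
    by rewrite mem_filter u0W mem_index_enum.
  by case: [seq u <- index_enum U | u \in W e] => [|x s] //= _; rewrite big_cons min0n.
pose alpha (e : 'I_m) : 'M['F_2]_(bval dem A (W e), m) := \matrix_(k, j) (j == e)%:R.
exists (\rank (\mxcol_e alpha e))%:R, m, W, 1%N, _, alpha.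
split => //.
- split => //.
  + move=> e; apply/set0Pn; have [u hu] := hdem e; exists u; by rewrite inE hu.
  + move=> e e' ne; rewrite -finset.setI_eq0; apply/eqP/setP => u.
    rewrite !inE; apply/negbTE/andP => -[/eqP ue /eqP ue'].
    by rewrite -ue -ue' eqxx in ne.
  + by move=> u; exists (dem u); rewrite inE.
- by rewrite card_Fp.
- move=> e; split.
    by move=> k i; rewrite Y1 inE mxE => /negbTE ->.
  move=> u; rewrite inE => /eqP ue.
  have k0 : 'I_(bval dem A (W e)) by rewrite b1; exact: ord0.
  exists (fun y _ => y k0 0) => x.
  rewrite mxE (bigD1 e) //= mxE eqxx mul1r big1 ?addr0; first by rewrite ue.
  by move=> j /negbTE nj; rewrite mxE nj mul0r.
Qed.
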